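(* Let $\mathcal L_0,\mathcal L_1$ be as described in the context and $\mathcal L_N=\mathcal L_0+\mathcal P_N\mathcal L_1\mathcal P_N$. For any $c>0$, for all sufficiently large $N$, $$\sigma(\mathcal L_0+\mathcal P_N\mathcal L_1;\operatorname{ran}\mathcal P_N)\cap\{z\in\mathbb C:|z|\le cN^{k-1}\}=\sigma(\mathcal L_N;L^2(\mathbb T))\cap\{z\in\mathbb C:|z|\le cN^{k-1}\}.$$
   Context: $\mathbb T=[0,2\pi)$ with endpoints identified; $e_j(\theta)=e^{ij\theta}$, $u_j=\frac1{2\pi}\int_0^{2\pi}u\bar e_j\,d\theta$; $H^s(\mathbb T)$ the Sobolev space with norm $\|u\|_s^2=c_{|s|}\sum_j|u_j|^2\max\{1,|j|\}^{2s}$. For $N\ge1$, $N_-=\lfloor N/2\rfloor$, $N_+=\lfloor(N-1)/2\rfloor$, $\mathcal P_Nu=\sum_{j=-N_-}^{N_+}u_je_j$. Fix integers $k\ge1$, $0\le p<k$, $0\le q\le k$, $\ell\ge1$, constants $c_q,\dots,c_k\in\mathbb C$ with $c_k\ne0$, and $a_0,\dots,a_p\in H^\ell(\mathbb T)$; $\mathcal L_0u=\sum_{j=q}^kc_j\frac{d^ju}{d\theta^j}$, $\mathcal L_1u=\sum_{j=0}^pa_j\frac{d^ju}{d\theta^j}$. $\sigma(\mathcal L_0+\mathcal P_N\mathcal L_1;\operatorname{ran}\mathcal P_N)$ is the spectrum (set of eigenvalues) of the restriction of $\mathcal L_0+\mathcal P_N\mathcal L_1$ to the finite-dimensional invariant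 space $\operatorname{ran}\mathcal P_N$; $\sigma(\mathcal L_N;L^2(\mathbb T))$ is the spectrum of $\mathcal L_N$ acting on $L^2(\mathbb T)$ (with domain $H^k(\mathbb T)$). *)

(* Defs.v *)
(* Everything is expressed on the Fourier side: a function u in L^2(T) is
   represented by its Fourier coefficient sequence (u_j)_{j in Z}, u : int -> R[i]. *)
From HB Require Import structures.
From mathcomp Require Import all_boot all_order all_algebra.
From mathcomp Require Import reals complex.
Set Implicit Arguments. Unset Strict Implicit. Unset Printing Implicit Defensive.
Import Order.TTheory GRing.Theory Num.Theory.
Local Open Scope ring_scope.
Local Open Scope complex_scope.

Section Defs.
Variable R : realType.
Local Notation C := R[i].

Definition sqn (z : C) : R := (@complex.Re R z) ^+ 2 + (@complex.Im R z) ^+ 2.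

Definition cabs (z : C) : R := Num.sqrt (sqn z).

(* u belongs to H^s(T): sum_j |u_j|^2 max{1,|j|}^{2s} < oo
   (nonnegative terms: bounded symmetric partial sums). H^0 = L^2. *)
Definition in_H (s : nat) (u : int -> C) : Prop :=
  exists M : R, forall n : nat,
    \sum_(i < (2 * n).+1) sqn (u (i%:Z - n%:Z)) * ((maxn 1 `|i%:Z - n%:Z|%N) ^ (2 * s))%:R <= M.

(* Fourier symbol of d^m/dtheta^m at frequency j : (i j)^m *)
Definition dsym (m : nat) (j : int) : C := ('i * j%:~R) ^+ m.

(* symbol of L_0 = sum_{m=q}^k c_m d^m/dtheta^m *)
Definition sym0 (k q : nat) (c : nat -> C) (j : int) : C :=
  \sum_(q <= m < k.+1) c m * dsym m j.

Definition inRange (N : nat) (j : int) : bool :=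
  (- (N./2)%:Z <= j) && (j <= (N.-1)./2%:Z).

Definition PN (N : nat) (u : int -> C) : int -> C :=
  fun j => if inRange N j then u j else 0.

(* Fourier coefficients of P_N L_1 P_N u, where L_1 u = sum_{m<=p} a_m d^m u,
   a : nat -> (int -> C) gives the Fourier coefficients of a_0..a_p.
   The product a_m * (d^m P_N u) has coefficients given by the (finite)
   convolution sum_{l in range} (a_m)_{j-l} (i l)^m u_l. *)
Definition PL1P (N p : nat) (a : nat -> int -> C) (u : int -> C) : int -> C :=
  fun j => if inRange N j then
    \sum_(m < p.+1) \sum_(t < N)
       let l := t%:Z - (N./2)%:Z in a m (j - l) * dsym m l * u l
  else 0.

Definition LN (N k q p : nat) (c : nat -> C) (a : nat -> int -> C) (u : int -> C)
  : int -> C :=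
  fun j => sym0 k q c j * u j + PL1P N p a u j.

(* z in sigma(L_0 + P_N L_1 ; ran P_N): z is an eigenvalue of the restriction of
   L_0 + P_N L_1 to ran P_N (on ran P_N, P_N L_1 u = P_N L_1 P_N u). *)
Definition spec_fin (N k q p : nat) (c : nat -> C) (a : nat -> int -> C) (z : C)
  : Prop :=
  exists u : int -> C,
    (forall j, ~~ inRange N j -> u j = 0) /\ (exists j, u j != 0) /\
    (forall j, inRange N j -> LN N k q p c a u j = z * u j).

(* z in sigma(L_N ; L^2(T)) with domain H^k: L_N - z : H^k -> L^2 is not bijective *)
Definition spec_L2 (N k q p : nat) (c : nat -> C) (a : nat -> int -> C) (z : C)
  : Prop :=
  ~ (forall f : int -> C, in_H 0 f ->
       exists u : int -> C, in_H k u /\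
         (forall j, LN N k q p c a u j - z * u j = f j) /\
         (forall v : int -> C, in_H k v ->
            (forall j, LN N k q p c a v j - z * v j = f j) -> v = u)).

End Defs.

(* Main.v *)
Require Import Defs.
From HB Require Import structures.
From mathcomp Require Import all_boot all_order all_algebra.
From mathcomp Require Import reals complex.
From mathcomp Require Import zify ring lra.
From Stdlib Require Import FunctionalExtensionality Classical.
Import Order.TTheory GRing.Theory Num.Theory.
Local Open Scope ring_scope.
Local Open Scope complex_scope.
Set Implicit Arguments. Unset Strict Implicit. Unset Printing Implicit Defensive.

Section Aux.
Variable R : realType.
Local Notation C := R[i].

Lemma cabsE (z : C) : (cabs z)%:C = `|z|.
Proof. by rewrite normc_def. Qed.

Lemma realC_inj (x y : R) : x%:C = y%:C -> x = y.
Proof. by case. Qed.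

Lemma sqn_ge0 (z : C) : 0 <= sqn z.
Proof. by rewrite /sqn addr_ge0 ?sqr_ge0. Qed.

Lemma cabs_ge0 (z : C) : 0 <= cabs z.
Proof. exact: sqrtr_ge0. Qed.

Lemma sqnE (z : C) : sqn z = cabs z ^+ 2.
Proof. by rewrite /cabs sqr_sqrtr ?sqn_ge0. Qed.

Lemma cabsM (x y : C) : cabs (x * y) = cabs x * cabs y.
Proof. by apply: realC_inj; rewrite rmorphM /= !cabsE normrM. Qed.

Lemma cabsD (x y : C) : cabs (x + y) <= cabs x + cabs y.
Proof. by rewrite -lecR rmorphD /= !cabsE ler_normD. Qed.

Lemma cabsN (x : C) : cabs (- x) = cabs x.
Proof. by apply: realC_inj; rewrite !cabsE normrN. Qed.

Lemma cabsB (x y : C) : cabs x - cabs y <= cabs (x - y).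
Proof. by rewrite -lecR rmorphB /= !cabsE lerB_dist. Qed.

Lemma cabsX (x : C) n : cabs (x ^+ n) = cabs x ^+ n.
Proof. by apply: realC_inj; rewrite rmorphXn /= !cabsE normrX. Qed.

Lemma cabsV (x : C) : cabs (x ^-1) = (cabs x)^-1.
Proof. by apply: realC_inj; rewrite fmorphV /= !cabsE normfV. Qed.

Lemma cabs0 : cabs (0 : C) = 0.
Proof. by apply: realC_inj; rewrite cabsE normr0. Qed.

Lemma cabs_eq0 (x : C) : (cabs x == 0) = (x == 0).
Proof. by rewrite -(inj_eq (@realC_inj)) cabsE normr_eq0. Qed.

Lemma cabs_sum (I : Type) (r : seq I) (F : I -> C) :
  cabs (\sum_(i <- r) F i) <= \sum_(i <- r) cabs (F i).
Proof.
elim: r => [|x r IH]; first by rewrite !big_nil cabs0.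
rewrite !big_cons; apply: le_trans (cabsD _ _) _; exact: lerD.
Qed.

Lemma cabsi : cabs ('i : C) = 1.
Proof. by rewrite /cabs /sqn /= expr0n /= add0r expr1n sqrtr1. Qed.

Lemma cabs_int (j : int) : cabs (j%:~R : C) = (`|j|%N)%:R.
Proof.
apply: realC_inj; rewrite cabsE rmorph_nat.
by rewrite natr_absz -intr_norm.
Qed.

Lemma cabs_dsym m j : cabs (dsym R m j) = ((`|j|%N)%:R) ^+ m.
Proof. by rewrite /dsym cabsX cabsM cabsi mul1r cabs_int. Qed.

Lemma sqn_add (x y : C) : sqn (x + y) <= 2 * sqn x + 2 * sqn y.
Proof.
case: x => a b; case: y => c d; rewrite /sqn /=.
have h1 := sqr_ge0 (a - c); have h2 := sqr_ge0 (b - d).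
rewrite !expr2 in h1 h2 *; nra.
Qed.


Lemma sqn0 : sqn (0 : C) = 0.
Proof. by rewrite /sqn /= expr0n addr0. Qed.

Lemma in_H0 s : in_H s (fun _ => 0 : C).
Proof. by exists 0 => n; rewrite big1 // => i _; rewrite sqn0 mul0r. Qed.

Lemma in_H_add s (u v : int -> C) : in_H s u -> in_H s v ->
  in_H s (fun j => u j + v j).
Proof.
move=> [M1 H1] [M2 H2]; exists (2 * M1 + 2 * M2) => n.
apply: (@le_trans _ _ (\sum_(i < (2 * n).+1)
  (2 * (sqn (u (i%:Z - n%:Z)) * ((maxn 1 `|i%:Z - n%:Z|%N) ^ (2 * s))%:R) +
   2 * (sqn (v (i%:Z - n%:Z)) * ((maxn 1 `|i%:Z - n%:Z|%N) ^ (2 * s))%:R)))).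
  apply: ler_sum => i _; rewrite !mulrA -mulrDl; apply: ler_wpM2r => //.
  exact: sqn_add.
rewrite big_split /= -!mulr_sumr; apply: lerD; apply: ler_wpM2l => //; [exact: H1 | exact: H2].
Qed.

Lemma in_H_sum s (I : Type) (r : seq I) (g : I -> int -> C) :
  (forall i, in_H s (g i)) -> in_H s (fun j => \sum_(i <- r) g i j).
Proof.
move=> Hg; elim: r => [|x r IH].
  by have [M HM] := in_H0 s; exists M => n; under eq_bigr do rewrite big_nil.
have := in_H_add (Hg x) IH; case=> M HM; exists M => n.
by under eq_bigr do rewrite big_cons.
Qed.

Lemma in_H_single s (j0 : int) (y : C) :
  in_H s (fun j => if j == j0 then y else 0).
Proof.
exists (sqn y * ((maxn 1 `|j0|%N) ^ (2 * s))%:R) => n.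
case: (boolP [exists i : 'I_(2 * n).+1, i%:Z - n%:Z == j0]).
  move=> /existsP [i0 /eqP Hi0].
  rewrite (bigD1 i0) //= big1 ?addr0 ?Hi0 ?eqxx //.
  move=> i Hi; case: eqP => [E|_]; last by rewrite sqn0 mul0r.
  by move/eqP: Hi; case; apply: val_inj => /=; lia.
move=> /existsPn H; rewrite big1; last first.
  by move=> i _; rewrite (negbTE (H i)) sqn0 mul0r.
by rewrite mulr_ge0 ?sqn_ge0.
Qed.

Lemma in_H_dom s (u f : int -> C) (K : R) : 0 <= K ->
  (forall j, sqn (u j) * ((maxn 1 `|j|%N) ^ (2 * s))%:R <= K * sqn (f j)) ->
  in_H 0 f -> in_H s u.
Proof.
move=> K0 Hd [M HM]; exists (K * M) => n.
apply: (@le_trans _ _ (\sum_(i < (2 * n).+1) K * sqn (f (i%:Z - n%:Z)))).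
  by apply: ler_sum => i _; exact: Hd.
rewrite -mulr_sumr; apply: ler_wpM2l => //.
apply: le_trans (HM n); rewrite le_eqVlt; apply/orP; left; apply/eqP.
by apply: eq_bigr => i _; rewrite muln0 expn0 mulr1.
Qed.


Definition lidx (N t : nat) : int := t%:Z - (N./2)%:Z.

Lemma inRange_l N (t : 'I_N) : inRange N (lidx N t).
Proof. have := ltn_ord t; rewrite /inRange /lidx => Ht; apply/andP; split; lia. Qed.

Lemma inRange_ex N j : (0 < N)%N -> inRange N j -> exists t : 'I_N, j = lidx N t.
Proof.
rewrite /inRange => N0 /andP [H1 H2].
have Ht : (absz (j + (N./2)%:Z)%R < N)%N by lia.
by exists (Ordinal Ht); rewrite /lidx /=; lia.
Qed.

Lemma lidx_inj N (t1 t2 : 'I_N) : lidx N t1 = lidx N t2 -> t1 = t2.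
Proof. by rewrite /lidx => E; apply: val_inj => /=; lia. Qed.

Definition ext N (x : 'rV[C]_N) (j : int) : C :=
  \sum_(t < N) (if j == lidx N t then x 0 t else 0).

Lemma ext_l N (x : 'rV[C]_N) (s : 'I_N) : ext x (lidx N s) = x 0 s.
Proof.
rewrite /ext (bigD1 s) //= eqxx big1 ?addr0 // => t Ht.
case: eqP => // /lidx_inj E; by rewrite E eqxx in Ht.
Qed.

Lemma ext_out N (x : 'rV[C]_N) j : ~~ inRange N j -> ext x j = 0.
Proof.
move=> Hj; rewrite /ext big1 // => t _; case: eqP => // E.
by move: Hj; rewrite E inRange_l.
Qed.

Lemma in_H_ext s N (x : 'rV[C]_N) : in_H s (ext x).
Proof. by apply: in_H_sum => t; apply: in_H_single. Qed.

Definition Mx N k q p (c : nat -> C) (a : nat -> int -> C) (z : C) : 'M[C]_N :=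
  \matrix_(t, s) ((t == s)%:R * (sym0 k q c (lidx N s) - z) +
     \sum_(m < p.+1) a m (lidx N s - lidx N t) * dsym R m (lidx N t)).

Definition vecf N (u : int -> C) : 'rV[C]_N := \row_t u (lidx N t).

Lemma LN_vec N k q p c a z (u : int -> C) (s : 'I_N) :
  LN N k q p c a u (lidx N s) - z * u (lidx N s) = (vecf N u *m Mx N k q p c a z) 0 s.
Proof.
rewrite /LN /PL1P /Mx /vecf inRange_l !mxE.
under [in RHS]eq_bigr do rewrite !mxE mulrDr.
rewrite big_split /=.
have -> : \sum_(i < N) u (lidx N i) * ((i == s)%:R * (sym0 k q c (lidx N s) - z))
   = u (lidx N s) * (sym0 k q c (lidx N s) - z).
  rewrite (bigD1 s) //= eqxx mul1r big1 ?addr0 // => t /negbTE ->.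
  by rewrite mul0r mulr0.
have -> : \sum_(i < N) u (lidx N i) *
     \sum_(m < p.+1) a m (lidx N s - lidx N i) * dsym R m (lidx N i)
   = \sum_(m < p.+1) \sum_(t < N)
        a m (lidx N s - lidx N t) * dsym R m (lidx N t) * u (lidx N t).
  under eq_bigr => i _ do rewrite mulr_sumr.
  rewrite exchange_big /=; apply: eq_bigr => m _; apply: eq_bigr => t _.
  by rewrite mulrC.
rewrite /lidx; ring.
Qed.

Lemma cabs_addl (x y : C) : cabs y - cabs x <= cabs (x + y).
Proof. by have := cabsB y (- x); rewrite cabsN opprK [y + x]addrC. Qed.

Lemma sym0_big k q (c : nat -> C) (j : int) : (q <= k)%N -> (1 <= `|j|)%N ->
  cabs (c k) * ((`|j|%N)%:R) ^+ k - (\sum_(m < k) cabs (c m)) * ((`|j|%N)%:R) ^+ (k - 1)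
  <= cabs (sym0 k q c j).
Proof.
move=> qk j1; set r : R := (`|j|%N)%:R.
have r1 : 1 <= r by rewrite /r ler1n.
rewrite /sym0 big_nat_recr //=.
apply: le_trans _ (cabs_addl _ _); rewrite cabsM cabs_dsym -/r lerB //.
apply: le_trans (cabs_sum _ _) _.
apply: (@le_trans _ _ (\sum_(q <= m < k) cabs (c m) * r ^+ (k - 1))).
  rewrite big_nat_cond [X in _ <= X]big_nat_cond; apply: ler_sum => m /andP [/andP [_ Hm] _].
  rewrite cabsM cabs_dsym -/r; apply: ler_wpM2l; first exact: cabs_ge0.
  by apply: ler_weXn2l => //; lia.
rewrite -mulr_suml; apply: ler_wpM2r; first by rewrite exprn_ge0 // (le_trans ler01).
rewrite -(big_mkord xpredT (fun m => cabs (c m))) (big_cat_nat (leq0n q) qk) /=.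
by rewrite lerDr sumr_ge0 // => m _; exact: cabs_ge0.
Qed.

Lemma gap k q (c : nat -> C) (cc : R) (N : nat) (j : int) (z : C) :
  (1 <= k)%N -> (q <= k)%N -> (1 <= `|j|)%N -> (N <= 2 * `|j|)%N -> 0 <= cc ->
  cabs z <= cc * N%:R ^+ (k - 1) ->
  4 * ((\sum_(m < k) cabs (c m)) + cc * 2 ^+ (k - 1)) <= cabs (c k) * N%:R ->
  cabs (c k) / 2 * ((`|j|%N)%:R) ^+ k <= cabs (sym0 k q c j - z).
Proof.
move=> k1 qk j1 Nj cc0 Hz HN.
have := sym0_big c qk j1; set r : R := (`|j|%N)%:R; set B := \sum_(m < k) _ => Hs.
have r1 : 1 <= r by rewrite /r ler1n.
have Nr : N%:R <= 2 * r by rewrite /r -natrM ler_nat.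
have HNk : N%:R ^+ (k - 1) <= 2 ^+ (k - 1) * r ^+ (k - 1) :> R.
  by rewrite -exprMn lerXn2r // ?nnegrE // mulr_ge0 // (le_trans ler01).
have B0 : 0 <= B by rewrite sumr_ge0 // => m _; exact: cabs_ge0.
have ck0 := cabs_ge0 (c k).
have P0 : 0 <= r ^+ (k - 1) by rewrite exprn_ge0 // (le_trans ler01).
have rk : r ^+ k = r * r ^+ (k - 1) by rewrite -exprS; congr (_ ^+ _); lia.
have := cabsB (sym0 k q c j) z; rewrite rk in Hs *.
set P := r ^+ (k - 1) in P0 HNk Hs *.
move=> Hb.
have H2 : cc * N%:R ^+ (k - 1) <= cc * 2 ^+ (k - 1) * P.
  by rewrite -mulrA ler_wpM2l.
have H3 : 0 <= P * (cabs (c k) * r / 2 - (B + cc * 2 ^+ (k - 1))).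
  apply: mulr_ge0 => //; rewrite subr_ge0.
  have : cabs (c k) * N%:R <= cabs (c k) * (2 * r) by rewrite ler_wpM2l.
  move=> H4.
  have E : cabs (c k) * (2 * r) = 2 * (cabs (c k) * r) by ring.
  rewrite E in H4; rewrite -/B in HN.
  move: HN H4; generalize (cabs (c k) * r) (cabs (c k) * N%:R) (cc * 2 ^+ (k - 1)) => x y w.
  move=> *; lra.
nra.
Qed.


Lemma LN_zero N k q p (c : nat -> C) a j : LN N k q p c a (fun _ => 0) j = 0.
Proof.
rewrite /LN /PL1P mulr0 add0r; case: ifP => // _.
by rewrite big1 // => m _; rewrite big1 // => t _; rewrite mulr0.
Qed.

Lemma LN_out N k q p (c : nat -> C) a u j : ~~ inRange N j ->
  LN N k q p c a u j = sym0 k q c j * u j.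
Proof. by move=> H; rewrite /LN /PL1P (negbTE H) addr0. Qed.

Lemma out_bounds N j : (0 < N)%N -> ~~ inRange N j -> (1 <= `|j|)%N /\ (N <= 2 * `|j|)%N.
Proof. rewrite /inRange => N0 H; split; lia. Qed.

Lemma ext_vecf N (u : int -> C) : (0 < N)%N -> (forall j, ~~ inRange N j -> u j = 0) ->
  u = ext (vecf N u).
Proof.
move=> N0 Hs; apply: FunctionalExtensionality.functional_extensionality => j.
case: (boolP (inRange N j)) => H.
  by have [t ->] := inRange_ex N0 H; rewrite ext_l mxE.
by rewrite Hs // ext_out.
Qed.

Lemma vecf_ext N (x : 'rV[C]_N) : vecf N (ext x) = x.
Proof. by apply/rowP => t; rewrite mxE ext_l. Qed.

End Aux.

Theorem mainTheorem11 (R : realType) (k p q l : nat) (c : nat -> R[i])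
  (a : nat -> int -> R[i]) :
  (1 <= k)%N -> (p < k)%N -> (q <= k)%N -> (1 <= l)%N -> c k != 0 ->
  (forall m, (m <= p)%N -> in_H l (a m)) ->
  forall cc : R, 0 < cc ->
  exists N0 : nat, forall N : nat, (N0 <= N)%N ->
    forall z : R[i], cabs z <= cc * (N%:R) ^+ (k - 1) ->
      (spec_fin N k q p c a z <-> spec_L2 N k q p c a z).
Proof.
move=> k1 pk qk l1 ck0 _ cc cc0.
set ck := cabs (c k).
have ckp : 0 < ck by rewrite lt_def cabs_eq0 ck0 cabs_ge0.
set D := \sum_(m < k) cabs (c m) + cc * 2 ^+ (k - 1).
exists (Num.truncn (4 * D / ck)).+2 => N HN z Hz.
have N0 : (0 < N)%N by apply: leq_trans HN.
have HND : 4 * D <= ck * N%:R.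
  have := truncnS_gt (4 * D / ck); rewrite ltr_pdivrMr // => H.
  apply: le_trans (ltW H) _; rewrite mulrC ler_wpM2l ?(ltW ckp) // ler_nat.
  exact: leq_trans HN.
have Hgap : forall j, ~~ inRange N j ->
    ck / 2 * ((`|j|%N)%:R) ^+ k <= cabs (sym0 k q c j - z) /\ (1 <= `|j|)%N.
  move=> j Hj; have [j1 j2] := out_bounds N0 Hj; split => //.
  exact: gap qk j1 j2 (ltW cc0) Hz HND.
have Hd : forall j, ~~ inRange N j -> sym0 k q c j - z != 0.
  move=> j Hj; have [g j1] := Hgap j Hj; rewrite -cabs_eq0 gt_eqF //.
  apply: lt_le_trans g; rewrite mulr_gt0 ?divr_gt0 // exprn_gt0 // ltr0n; lia.
split.
- move=> [u [Hs [[j0 Hj0] Heig]]] Hbij.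
  have [u0 [_ [_ Huniq]]] := Hbij (fun _ => 0) (@in_H0 R 0).
  have E0 : (fun _ => 0) = u0.
    by apply: Huniq; [exact: (@in_H0 R k) | move=> j; rewrite LN_zero mulr0 subr0].
  have Hu : in_H k u by rewrite (ext_vecf N0 Hs); exact: in_H_ext.
  have Hsol : forall j, LN N k q p c a u j - z * u j = 0.
    move=> j; case: (boolP (inRange N j)) => H; first by rewrite Heig // subrr.
    by rewrite LN_out // Hs // !mulr0 subrr.
  have E1 := Huniq u Hu Hsol.
  by move: Hj0; rewrite E1 -E0 eqxx.
- move=> HL; apply: NNPP => Hf; apply: HL.
  set M := Mx N k q p c a z.
  have Mu : M \in unitmx.
    rewrite unitmxE unitfE; apply/negP => /det0P [v v0 vM].
    apply: Hf; exists (ext v); split; first by move=> j; exact: ext_out.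
    split.
      case: (boolP [exists t, v 0 t != 0]) => [/existsP [t Ht] | /existsPn H].
        by exists (lidx N t); rewrite ext_l.
      have v00 : v = 0.
        by apply/rowP => t; rewrite !mxE; apply/eqP; move: (H t); rewrite negbK.
      by rewrite v00 eqxx in v0.
    move=> j Hj; have [s ->] := inRange_ex N0 Hj; apply/eqP; rewrite -subr_eq0; apply/eqP.
    by rewrite LN_vec vecf_ext -/M vM mxE.
  move=> f Hf0.
  set x := vecf N f *m invmx M.
  set u := fun j => ext x j + (if inRange N j then 0 else f j / (sym0 k q c j - z)).
  have uin : forall t : 'I_N, u (lidx N t) = x 0 t.
    by move=> t; rewrite /u ext_l inRange_l addr0.
  have uout : forall j, ~~ inRange N j -> u j = f j / (sym0 k q c j - z).
    by move=> j Hj; rewrite /u ext_out // (negbTE Hj) add0r.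
  exists u; split; [|split].
  + apply: in_H_add; first exact: in_H_ext.
    apply: (@in_H_dom R k _ f (4 / ck ^+ 2)) => //.
      by rewrite divr_ge0 // exprn_ge0 // ltW.
    move=> j; case: (boolP (inRange N j)) => H.
      by rewrite sqn0 mul0r mulr_ge0 ?sqn_ge0 // divr_ge0 // exprn_ge0 // ltW.
    have [g j1] := Hgap j H.
    rewrite (maxn_idPr j1) natrX !sqnE cabsM cabsV.
    set cf := cabs (f j) in g *; set cd := cabs _ in g *.
    set r : R := (`|j|%N)%:R in g *.
    have cf0 : 0 <= cf := cabs_ge0 _.
    have r0 : 0 <= r by rewrite ler0n.
    have e0 : 0 <= r ^+ k by rewrite exprn_ge0.
    have cdp : 0 < cd.
      apply: lt_le_trans g; rewrite mulr_gt0 ?divr_gt0 // exprn_gt0 // ltr0n; lia.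
    have H1 : cf / cd * r ^+ k <= 2 * cf / ck.
      rewrite mulrAC ler_pdivrMr //.
      have -> : 2 * cf / ck * cd = cf * (2 * cd / ck) by ring.
      apply: ler_wpM2l => //; rewrite ler_pdivlMr //.
      move: g; generalize (r ^+ k) => e g; nra.
    have H2 := lerXn2r 2 (_ : 0 <= cf / cd * r ^+ k) (_ : 0 <= 2 * cf / ck) H1.
    have H3 := H2 (mulr_ge0 (divr_ge0 cf0 (ltW cdp)) e0) (divr_ge0 (mulr_ge0 (ler0n _ 2) cf0) (ltW ckp)).
    rewrite mulnC exprM -exprMn.
    have -> : 4 / ck ^+ 2 * cf ^+ 2 = (2 * cf / ck) ^+ 2 by rewrite -exprVn; ring.
    exact: H3.
  + move=> j; case: (boolP (inRange N j)) => H.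
      have [s ->] := inRange_ex N0 H; rewrite LN_vec.
      have -> : vecf N u = x by apply/rowP => t; rewrite mxE uin.
      by rewrite /x mulmxKV // mxE.
    by rewrite LN_out // -mulrBl uout // mulrC divfK // Hd.
  + move=> v _ Hv; apply: functional_extensionality => j.
    case: (boolP (inRange N j)) => H.
      have [s ->] := inRange_ex N0 H; rewrite uin.
      have Hvm : vecf N v *m M = vecf N f.
        by apply/rowP => t; rewrite -LN_vec Hv mxE.
      by rewrite /x -Hvm mulmxK // mxE.
    by rewrite uout // -(Hv j) LN_out // -mulrBl [_ * v j]mulrC mulfK //; exact: Hd.
Qed.
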